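(* Consider the problem $\min_{x\in\mathbb{R}^n} f(x)$ subject to $g_i(x)\le 0$, $i=1,\dots,m$, where $f:\mathbb{R}^n\to\mathbb{R}$ is convex, continuous and bounded below and each $g_i$ is differentiable and $\mu_i$-strongly convex ($\mu_i>0$). Assume there is $\tilde x$ with $g_i(\tilde x)<0$ for all $i$, and that for every minimizer $x_0^*$ of $f$ over $\mathbb{R}^n$ some $i$ has $g_i(x_0^* )>0$. Let $x_i^*=\arg\min_{x\in\mathbb{R}^n}g_i(x)$ and $$\mathcal{X}:=\mathcal{B}\Big(\tilde x,\ \min_{i\in[m]}2\sqrt{\tfrac{-2g_i(x_i^* )}{\mu_i}}\Big).$$ Then the optimal solution $x^*$ of the problem lies in the interior of $\mathcal{X}$.
   Context: $\mathcal{B}(x,r)=\{z:\|z-x\|\le r\}$ is the closed Euclidean ball. $x^*$ denotes an optimal solution of the problem. *)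

(* Defs.v *)
From HB Require Import structures.
From mathcomp Require Import all_boot all_order all_algebra.
From mathcomp Require Import all_classical all_reals all_analysis.
Set Implicit Arguments. Unset Strict Implicit. Unset Printing Implicit Defensive.
Import Order.TTheory GRing.Theory Num.Theory.
Import numFieldNormedType.Exports.
Local Open Scope ring_scope.
Local Open Scope classical_set_scope.

Section Defs.
Variables (R : realType) (n : nat).

(* Euclidean norm on R^n (the library norm on matrices is the max norm). *)
Definition enorm (x : 'rV[R]_n) : R := Num.sqrt (\sum_(j < n) (x ord0 j) ^+ 2).

Definition cball (x : 'rV[R]_n) (r : R) : set 'rV[R]_n :=
  [set z | enorm (z - x) <= r].

Definition einterior (A : set 'rV[R]_n) : set 'rV[R]_n :=
  [set x | exists2 e : R, 0 < e & cball x e `<=` A].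

Definition convex_fun (f : 'rV[R]_n -> R) : Prop :=
  forall (x y : 'rV[R]_n) (t : R), 0 <= t <= 1 ->
    f (t *: x + (1 - t) *: y) <= t * f x + (1 - t) * f y.

Definition strongly_convex (mu : R) (g : 'rV[R]_n -> R) : Prop :=
  forall (x y : 'rV[R]_n) (t : R), 0 <= t <= 1 ->
    g (t *: x + (1 - t) *: y)
      <= t * g x + (1 - t) * g y - mu / 2 * t * (1 - t) * enorm (x - y) ^+ 2.

Definition bounded_below (f : 'rV[R]_n -> R) : Prop :=
  exists M : R, forall x, M <= f x.

End Defs.

Definition ord_min (R : realType) (m : nat) (hm : (0 < m)%N) (F : 'I_m -> R) : R :=
  \big[Num.min/F (Ordinal hm)]_(i < m) F i.

(* Main.v *)
Require Import Defs.
From HB Require Import structures.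
From mathcomp Require Import all_boot all_order all_algebra.
From mathcomp Require Import all_classical all_reals all_analysis.
From mathcomp Require Import ring lra.
Import Order.TTheory GRing.Theory Num.Theory.
Import numFieldNormedType.Exports.
Local Open Scope ring_scope.
Local Open Scope classical_set_scope.

Section H.
Variables (R : realType) (n : nat).

Lemma sq0 (u : 'I_n -> R) : \sum_j u j ^+ 2 = 0 -> forall j, u j = 0.
Proof.
move=> /eqP; rewrite psumr_eq0; last by move=> i _; exact: sqr_ge0.
move=> /allP H j; have := H j (mem_index_enum j); rewrite /= sqrf_eq0.
by move/eqP.
Qed.

Lemma dot_le (u v : 'I_n -> R) :
  \sum_j u j * v j <= Num.sqrt (\sum_j u j ^+ 2) * Num.sqrt (\sum_j v j ^+ 2).
Proof.
set A := Num.sqrt _; set B := Num.sqrt _; set S := \sum_j _.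
have hu : 0 <= \sum_j u j ^+ 2 by apply: sumr_ge0 => i _; exact: sqr_ge0.
have hv : 0 <= \sum_j v j ^+ 2 by apply: sumr_ge0 => i _; exact: sqr_ge0.
have A2 : A ^+ 2 = \sum_j u j ^+ 2 by rewrite sqr_sqrtr.
have B2 : B ^+ 2 = \sum_j v j ^+ 2 by rewrite sqr_sqrtr.
have A0 : 0 <= A by exact: sqrtr_ge0.
have B0 : 0 <= B by exact: sqrtr_ge0.
have E : \sum_j (B * u j - A * v j) ^+ 2 =
   B ^+ 2 * \sum_j u j ^+ 2 + A ^+ 2 * \sum_j v j ^+ 2 - 2 * (A * B) * S.
  rewrite /S !mulr_sumr -big_split -sumrB /=; apply: eq_bigr => j _; ring.
have P : 0 <= \sum_j (B * u j - A * v j) ^+ 2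
  by apply: sumr_ge0 => i _; exact: sqr_ge0.
rewrite E -A2 -B2 in P.
have [AB|AB] := ltrP 0 (A * B).
  nra.
have AB0 : A * B = 0 by apply/eqP; rewrite eq_le AB mulr_ge0.
move/eqP: AB0; rewrite mulf_eq0 => /orP [] /eqP Z.
  have := (@sq0 u); rewrite -A2 Z expr0n /= => /(_ erefl) h0.
  rewrite /S big1 ?Z ?mul0r // => j _; by rewrite h0 mul0r.
have := (@sq0 v); rewrite -B2 Z expr0n /= => /(_ erefl) h0.
rewrite /S big1 ?Z ?mulr0 // => j _; by rewrite h0 mulr0.
Qed.

Lemma enorm_ge0 (x : 'rV[R]_n) : 0 <= enorm x.
Proof. exact: sqrtr_ge0. Qed.

Lemma enorm_sq (x : 'rV[R]_n) : enorm x ^+ 2 = \sum_j x ord0 j ^+ 2.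
Proof. by rewrite sqr_sqrtr //; apply: sumr_ge0 => i _; exact: sqr_ge0. Qed.

Lemma enormD (x y : 'rV[R]_n) : enorm (x + y) <= enorm x + enorm y.
Proof.
rewrite -ler_sqr ?nnegrE ?addr_ge0 ?enorm_ge0 //.
rewrite enorm_sq.
have -> : \sum_j (x + y) ord0 j ^+ 2 =
  \sum_j x ord0 j ^+ 2 + \sum_j y ord0 j ^+ 2 + 2 * \sum_j x ord0 j * y ord0 j.
  rewrite mulr_sumr -!big_split /=; apply: eq_bigr => j _; rewrite mxE; ring.
have := dot_le (fun j => x ord0 j) (fun j => y ord0 j).
rewrite -/(enorm x) -/(enorm y) -!enorm_sq => h.
nra.
Qed.

Lemma enormB (x y : 'rV[R]_n) : enorm (x - y) = enorm (y - x).
Proof.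
rewrite /enorm; congr Num.sqrt; apply: eq_bigr => j _.
by rewrite !mxE -sqrrN opprB.
Qed.

Lemma sc_min (mu : R) (g : 'rV[R]_n -> R) c x : 0 < mu ->
  strongly_convex mu g -> (forall y, g c <= g y) ->
  mu / 2 * enorm (x - c) ^+ 2 <= g x - g c.
Proof.
move=> mu0 H Hc.
set a := g x - g c; set b := mu / 2 * enorm (x - c) ^+ 2.
have a0 : 0 <= a by rewrite subr_ge0.
rewrite leNgt; apply/negP => ab.
have b0 : 0 < b by apply: le_lt_trans ab.
set t := (b - a) / (2 * b).
have tb : t * (2 * b) = b - a by rewrite /t mulfVK // mulf_neq0 // gt_eqF.
have t0 : 0 < t by rewrite /t divr_gt0 // ?subr_gt0 // mulr_gt0.
have t1 : t <= 1.
  rewrite /t ler_pdivrMr; lra.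
have h := H x c t ltac:(by rewrite (ltW t0) t1).
have := Hc (t *: x + (1 - t) *: c) => h2.
have h3 : 0 <= t * a - t * (1 - t) * b.
  rewrite /a /b; move: h h2; set G := g _; nra.
nra.
Qed.

End H.
Arguments enormD {R n}.
Arguments enormB {R n}.
Arguments enorm_ge0 {R n}.
Theorem proposition3 (R : realType) (n m : nat) (hm : (0 < m)%N)
  (f : 'rV[R]_n -> R) (g : 'I_m -> 'rV[R]_n -> R) (mu : 'I_m -> R)
  (xt : 'rV[R]_n) (xs : 'I_m -> 'rV[R]_n) (xstar : 'rV[R]_n) :
  convex_fun f -> continuous f -> bounded_below f ->
  (forall i, 0 < mu i) ->
  (forall i x, differentiable (g i) x) ->
  (forall i, strongly_convex (mu i) (g i)) ->
  (forall i, g i xt < 0) ->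
  (forall x0, (forall x, f x0 <= f x) -> exists i, 0 < g i x0) ->
  (forall i x, g i (xs i) <= g i x) ->
  (* xstar is an optimal solution of min f s.t. g_i <= 0 *)
  (forall i, g i xstar <= 0) ->
  (forall x, (forall i, g i x <= 0) -> f xstar <= f x) ->
  einterior (cball xt
    (ord_min hm (fun i => 2 * Num.sqrt (- (2 * g i (xs i)) / mu i)))) xstar.
Proof.
move=> _ _ _ mu0 _ sc gt _ gmin gstar _.
set r := ord_min _ _.
set D := enorm (xstar - xt).
have key : forall i, D < 2 * Num.sqrt (- (2 * g i (xs i)) / mu i).
  move=> i.
  set rho := Num.sqrt _.
  have m0 := mu0 i.
  have h1 := @sc_min _ _ _ _ _ xt m0 (sc i) (gmin i).
  have h2 := @sc_min _ _ _ _ _ xstar m0 (sc i) (gmin i).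
  have g0 := gt i. have g1 := gstar i.
  have gx := gmin i xt.
  have pos : 0 < - (2 * g i (xs i)) / mu i.
    rewrite divr_gt0 //; lra.
  have d1 : enorm (xt - xs i) < rho.
    rewrite -[enorm _]ger0_norm ?enorm_ge0 // -sqrtr_sqr ltr_sqrt //.
    rewrite ltr_pdivlMr //; nra.
  have d2 : enorm (xstar - xs i) <= rho.
    rewrite -[enorm _]ger0_norm ?enorm_ge0 // -sqrtr_sqr ler_sqrt; last exact: ltW pos.
    rewrite ler_pdivlMr //; nra.
  have := enormD (xstar - xs i) (xs i - xt).
  rewrite addrA subrK -/D.
  rewrite (enormB (xs i)) => h; lra.
have Dr : D < r.
  rewrite /r /ord_min; apply: (big_ind (fun y => D < y)) => //.
  by move=> x y hx hy; rewrite lt_min hx hy.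
exists (r - D); first by rewrite subr_gt0.
move=> z; rewrite /cball /= => hz.
have := enormD (z - xstar) (xstar - xt).
rewrite addrA subrK -/D => h; lra.
Qed.
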